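(* Let $A\in\mathbb R^{m\times n}$, $b\in\mathbb R^m$, $c\in\mathbb R^n$ with $b>\mathbf 0$ and $c>\mathbf 0$, and let $(P)$: $\max c^\intercal x$ s.t. $Ax\le b$, $x\ge\mathbf 0$, with dual $(D)$: $\min b^\intercal y$ s.t. $A^\intercal y\ge c$, $y\ge\mathbf 0$. Consider the zero-sum game with the skew-symmetric $(m+n+1)\times(m+n+1)$ payoff matrix $$\begin{pmatrix}\mathbf 0 & A & -b\\ -A^\intercal & \mathbf 0 & c\\ b^\intercal & -c^\intercal & 0\end{pmatrix},$$ and let $(p^*,q^*,t^* )$ (with $p^*\in\mathbb R^m$, $q^*\in\mathbb R^n$, $t^*\in\mathbb R$) be a maximin strategy of the row player. Then: 1. If $t^*>0$, then $\left(\frac1{t^*}q^*,\frac1{t^*}p^*\right)$ is an optimal primal-dual pair for $(P,D)$. 2. If $t^*=0$, then $q^*$ is an unboundedness certificate for $(P)$.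
   Context: Inequalities are componentwise. In a zero-sum game with payoff matrix $N$, mixed strategies are probability vectors, the row player receives $p^\intercal Nq$, and a maximin strategy of the row player is a $p^*\in\arg\max_p\min_q p^\intercal Nq$. An optimal primal-dual pair is a primal feasible $x$ and dual feasible $y$ with $c^\intercal x=b^\intercal y$; an unboundedness certificate for $(P)$ is $w$ with $Aw\le\mathbf 0$, $w\ge\mathbf 0$, $c^\intercal w>0$. *)

(* Defs.v *)
From HB Require Import structures.
From mathcomp Require Import all_boot all_order all_algebra.
From mathcomp Require Import boolp classical_sets reals.
Set Implicit Arguments. Unset Strict Implicit. Unset Printing Implicit Defensive.
Import Order.TTheory GRing.Theory Num.Theory.
Local Open Scope ring_scope.
Local Open Scope classical_set_scope.

Definition mle (R : realType) (k l : nat) (u v : 'M[R]_(k, l)) : Prop :=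
  forall i j, u i j <= v i j.
Definition mlt (R : realType) (k l : nat) (u v : 'M[R]_(k, l)) : Prop :=
  forall i j, u i j < v i j.

Definition probvec (R : realType) (k : nat) (p : 'cV[R]_k) : Prop :=
  mle 0 p /\ \sum_(i < k) p i 0 = 1.

Definition payoff (R : realType) (k : nat) (N : 'M[R]_k) (p q : 'cV[R]_k) : R :=
  (p^T *m N *m q) 0 0.

Definition guaranteed (R : realType) (k : nat) (N : 'M[R]_k) (p : 'cV[R]_k) : R :=
  inf [set payoff N p q | q in [set q : 'cV[R]_k | probvec q]].

Definition maximin (R : realType) (k : nat) (N : 'M[R]_k) (ps : 'cV[R]_k) : Prop :=
  probvec ps /\ forall p, probvec p -> guaranteed N p <= guaranteed N ps.

Definition lp_game (R : realType) (m n : nat) (A : 'M[R]_(m, n))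
  (b : 'cV[R]_m) (c : 'cV[R]_n) : 'M[R]_(m + n + 1) :=
  block_mx (block_mx (0 : 'M_(m, m)) A (- A^T) (0 : 'M_(n, n)))
           (col_mx (- b) c)
           (row_mx b^T (- c^T))
           (0 : 'M_1).

Definition primal_feasible (R : realType) (m n : nat) (A : 'M[R]_(m, n))
  (b : 'cV[R]_m) (x : 'cV[R]_n) : Prop := mle (A *m x) b /\ mle 0 x.
Definition dual_feasible (R : realType) (m n : nat) (A : 'M[R]_(m, n))
  (c : 'cV[R]_n) (y : 'cV[R]_m) : Prop := mle c (A^T *m y) /\ mle 0 y.
Definition optimal_pair (R : realType) (m n : nat) (A : 'M[R]_(m, n))
  (b : 'cV[R]_m) (c : 'cV[R]_n) (x : 'cV[R]_n) (y : 'cV[R]_m) : Prop :=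
  [/\ primal_feasible A b x, dual_feasible A c y & c^T *m x = b^T *m y].
Definition unbounded_cert (R : realType) (m n : nat) (A : 'M[R]_(m, n))
  (c : 'cV[R]_n) (w : 'cV[R]_n) : Prop :=
  [/\ mle (A *m w) 0, mle 0 w & 0 < (c^T *m w) 0 0].

(* Main.v *)
Require Import Defs.
From HB Require Import structures.
From mathcomp Require Import all_boot all_order all_algebra.
From mathcomp Require Import boolp classical_sets reals.
From mathcomp Require Import ring lra.
Import Order.TTheory GRing.Theory Num.Theory.
Local Open Scope ring_scope.

Section Farkas.
Variable R : realType.

Definition ev {d} (a : 'rV[R]_d) (x : 'cV[R]_d) : R := (a *m x) 0 0.

Lemma evBl d (a a' : 'rV[R]_d) c x : ev (a - c *: a') x = ev a x - c * ev a' x.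
Proof. by rewrite /ev mulmxBl -scalemxAl !mxE. Qed.

Lemma evBr d (a : 'rV[R]_d) c x x' : ev a (x - c *: x') = ev a x - c * ev a x'.
Proof. by rewrite /ev mulmxBr -scalemxAr !mxE. Qed.

Lemma farkas d k (f : 'I_k -> 'rV[R]_d) (b : 'rV[R]_d) :
  (exists y : 'I_k -> R, (forall i, 0 <= y i) /\ b = \sum_(i < k) y i *: f i)
  \/ (exists x, (forall i, ev (f i) x <= 0) /\ 0 < ev b x).
Proof.
elim: k f b => [|k IH] f b.
  case: (boolP [exists j, b 0 j != 0]).
    move=> /existsP [j hj]; right; exists b^T; split; first by case.
    rewrite /ev mxE (bigD1 j) //= mxE.
    apply: (@lt_le_trans _ _ (b 0 j * b 0 j)).
      by rewrite -expr2 exprn_even_gt0.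
    rewrite lerDl; apply: sumr_ge0 => i _; rewrite mxE -expr2; exact: sqr_ge0.
  rewrite negb_exists => /forallP hb; left; exists (fun _ => 0); split=> //.
  rewrite big_ord0; apply/rowP => j; rewrite !mxE.
  by move: (hb j); rewrite negbK => /eqP.
have [[y [hy hb]]|[x [hx hbx]]] := IH (fun i => f (lift ord0 i)) b.
  left; exists (fun i => if unlift ord0 i is Some j then y j else 0); split.
    by move=> i; case: (unlift ord0 i).
  rewrite big_ord_recl unlift_none scale0r add0r hb; apply: eq_bigr => i _.
  by have -> : unlift ord0 (lift ord0 i) = Some i := liftK _ _.
have [ha|ha] := leP (ev (f ord0) x) 0.
  right; exists x; split=> // i; case: (unliftP ord0 i) => [j ->|->] //.
set al := ev (f ord0) x.
have al0 : al != 0 by rewrite gt_eqF.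
have [[y [hy hb]]|[x' [hx' hbx']]] :=
  IH (fun i => f (lift ord0 i) - (ev (f (lift ord0 i)) x / al) *: f ord0)
     (b - (ev b x / al) *: f ord0).
  left.
  exists (fun i => if unlift ord0 i is Some j then y j
          else ev b x / al - \sum_(j < k) y j * (ev (f (lift ord0 j)) x / al)); split.
    move=> i; case: (unlift ord0 i) => // .
    rewrite subr_ge0; apply: (@le_trans _ _ 0).
      rewrite -oppr_ge0 -sumrN; apply: sumr_ge0 => j _; rewrite -mulrN.
      apply: mulr_ge0 => //; rewrite -mulNr; apply: mulr_ge0; last by rewrite invr_ge0 ltW.
      by rewrite oppr_ge0.
    by rewrite divr_ge0 // ltW.
  rewrite big_ord_recl unlift_none.
  rewrite (eq_bigr (fun i => y i *: f (lift ord0 i))); last first.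
    by move=> i _; have -> : unlift ord0 (lift ord0 i) = Some i := liftK _ _.
  set c := ev b x / al.
  move/eqP: hb; rewrite subr_eq => /eqP hb; rewrite {1}hb.
  rewrite [X in X + c *: _ = _](eq_bigr (fun i => y i *: f (lift ord0 i) - (y i * (ev (f (lift ord0 i)) x / al)) *: f ord0)); last by move=> i _; rewrite scalerBr scalerA.
  rewrite sumrB -scaler_suml scalerBl.
  set S1 := \sum_(i < k) _ *: f _.
  set S2 := \sum_(i < k) _ * _.
  by rewrite addrC addrA [RHS]addrAC.
right; exists (x' - (ev (f ord0) x' / al) *: x); split.
  move=> i; case: (unliftP ord0 i) => [j ->|->].
    move: (hx' j); rewrite evBl !evBr.
    suff -> : ev (f (lift ord0 j)) x' - ev (f ord0) x' / al * ev (f (lift ord0 j)) x =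
      ev (f (lift ord0 j)) x' - ev (f (lift ord0 j)) x / al * ev (f ord0) x' by [].
    by rewrite /al; ring.
  by rewrite evBr -/al divfK // subrr.
move: hbx'; rewrite evBl !evBr.
suff -> : ev b x' - ev (f ord0) x' / al * ev b x =
      ev b x' - ev b x / al * ev (f ord0) x' by [].
by rewrite /al; ring.
Qed.


Lemma skew_sol K (N : 'M[R]_K) : N^T = -N -> (0 < K)%N ->
  exists s : 'cV[R]_K, (forall i, 0 <= s i 0) /\ \sum_i s i 0 = 1 /\
    forall i, (N *m s) i 0 <= 0.
Proof.
move=> hT K0.
have hN : forall i j, N i j = - N j i.
  by move=> i j; move/matrixP: hT => /(_ j i); rewrite !mxE.
pose f (i : 'I_(K + K)) : 'rV[R]_(K + 1) :=
  match split i with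
  | inl j => row_mx (col j N)^T (const_mx 1)
  | inr j => row_mx (delta_mx 0 j) 0 end.
have fl : forall j, f (lshift K j) = row_mx (col j N)^T (const_mx 1).
  by move=> j; rewrite /f -[lshift K j]/(unsplit (inl j)) unsplitK.
have fr : forall j, f (rshift K j) = row_mx (delta_mx 0 j) 0.
  by move=> j; rewrite /f -[rshift K j]/(unsplit (inr j)) unsplitK.
have [[y [hy hb]]|[x [hx hbx]]] := @farkas _ _ f (row_mx 0 (const_mx 1)).
  have he : forall t, (row_mx 0 (const_mx 1) : 'rV[R]_(K + 1)) 0 t =
      \sum_(j < K) y (lshift K j) * (f (lshift K j)) 0 t
      + \sum_(j < K) y (rshift K j) * (f (rshift K j)) 0 t.
    move=> t; rewrite {1}hb summxE big_split_ord /=.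
    by congr (_ + _); apply: eq_bigr => j _; rewrite mxE.
  exists (\col_j y (lshift K j)); split; first by move=> i; rewrite mxE.
  split.
    move: (he (rshift K 0)); rewrite row_mxEr mxE => ->.
    rewrite [X in _ + X]big1 ?addr0; last by move=> j _; rewrite fr row_mxEr mxE mulr0.
    by apply: eq_bigr => j _; rewrite fl row_mxEr !mxE mulr1.
  move=> i; move: (he (lshift 1 i)); rewrite row_mxEl mxE => /eqP.
  rewrite eq_sym addr_eq0 => /eqP e.
  have -> : (N *m \col_j y (lshift K j)) i 0 =
     \sum_(j < K) y (lshift K j) * (f (lshift K j)) 0 (lshift 1 i).
    rewrite mxE; apply: eq_bigr => j _; rewrite fl row_mxEl !mxE mulrC //.
  rewrite e oppr_le0; apply: sumr_ge0 => j _; rewrite fr row_mxEl mxE.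
  by apply: mulr_ge0 => //; case: (_ && _).
exfalso.
set u := usubmx x; set t := dsubmx x 0 0.
have evrow : forall (r : 'rV[R]_K) (c : 'rV[R]_1),
    ev (row_mx r c) x = (r *m u) 0 0 + c 0 0 * t.
  move=> r c; rewrite /ev -[x](vsubmxK x) mul_row_col mxE; congr (_ + _).
  by rewrite mxE big_ord1.
have ht : 0 < t by move: hbx; rewrite evrow mul0mx !mxE add0r mul1r.
have hu : forall j, u j 0 <= 0.
  by move=> j; move: (hx (rshift K j)); rewrite fr evrow [X in _ + X * _ <= _]mxE mul0r addr0 -rowE mxE.
have hw : forall j, \sum_i N i j * u i 0 <= - t.
  move=> j; move: (hx (lshift K j)); rewrite fl evrow [const_mx 1 0 0]mxE mul1r.
  rewrite -lerBrDr sub0r mxE => h; apply: le_trans h.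
  by rewrite le_eqVlt; apply/orP; left; apply/eqP; apply: eq_bigr => i _; rewrite !mxE.
set Q := \sum_j \sum_i u j 0 * N i j * u i 0.
have Q0 : Q = 0.
  have : Q = - Q.
    rewrite {1}/Q exchange_big /= /Q -sumrN; apply: eq_bigr => i _.
    rewrite -sumrN; apply: eq_bigr => j _; rewrite hN; ring.
  by move=> h; lra.
have : \sum_j (- u j 0) * t <= Q.
  rewrite /Q; apply: ler_sum => j _.
  rewrite (eq_bigr (fun i => u j 0 * (N i j * u i 0))); last by move=> i _; rewrite mulrA.
  rewrite -big_distrr /= mulNr -mulrN. exact: ler_wnM2l (hu j) _ _ (hw j).
rewrite Q0 -mulr_suml pmulr_lle0 // => hs.
have hz : forall j, u j 0 = 0.
  move=> j; apply/eqP; rewrite -oppr_eq0; apply/eqP.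
  apply: (psumr_eq0P (P := xpredT) (F := fun j => - u j 0)) => //.
    by move=> i _; rewrite oppr_ge0.
  by apply/le_anti; rewrite hs sumr_ge0 // => i _; rewrite oppr_ge0.
move: (hw (Ordinal K0)); rewrite big1; last by move=> i _; rewrite hz mulr0.
by rewrite oppr_ge0 leNgt ht.
Qed.

Lemma maximin_skew K (N : 'M[R]_K) ps : N^T = -N -> (0 < K)%N ->
  maximin N ps -> forall i, (N *m ps) i 0 <= 0.
Proof.
move=> hT K0 [pps hmax].
have hN : forall i j, N i j = - N j i.
  by move=> i j; move/matrixP: hT => /(_ j i); rewrite !mxE.
have rowN : forall (p : 'cV[R]_K) i, (p^T *m N) 0 i = - (N *m p) i 0.
  move=> p i; rewrite !mxE -sumrN; apply: eq_bigr => k _.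
  by rewrite !mxE (hN k i) mulrN mulrC.
have payE : forall p q, payoff N p q = \sum_j (p^T *m N) 0 j * q j 0.
  by move=> p q; rewrite /payoff mxE.
have [s [s0 [s1 sN]]] := @skew_sol _ N hT K0.
have ps_s : probvec s by split=> // i j; rewrite mxE ord1.
have g0 : 0 <= guaranteed N s.
  apply: lb_le_inf; first by exists (payoff N s s), s.
  move=> y [q [q0 _] <-]; rewrite payE; apply: sumr_ge0 => j _.
  apply: mulr_ge0; first by rewrite rowN oppr_ge0.
  by move: (q0 j 0); rewrite mxE.
have g1 := le_trans g0 (hmax s ps_s).
set M := \sum_j `|(ps^T *m N) 0 j|.
have hlb : has_lbound [set payoff N ps q | q in [set q : 'cV[R]_K | probvec q]].
  exists (- M); move=> y [q [q0 q1] <-]; rewrite payE.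
  rewrite -[- M]mulr1 -q1 mulr_sumr; apply: ler_sum => j _.
  apply: ler_wpM2r; first by move: (q0 j 0); rewrite mxE.
  apply: lerNnormlW; rewrite /M (bigD1 j) //= lerDl.
  by apply: sumr_ge0 => k _; exact: normr_ge0.
move=> i.
have pd : probvec (delta_mx i 0 : 'cV[R]_K).
  split; first by move=> a b; rewrite !mxE; case: (_ && _).
  rewrite (bigD1 i) //= !mxE !eqxx /= big1 ?addr0 // => k hk.
  by rewrite !mxE (negbTE hk).
have := ge_inf hlb (ex_intro2 _ _ (delta_mx i 0) pd erefl).
rewrite -/(guaranteed N ps) => h.
have := le_trans g1 h.
by rewrite /payoff -colE mxE rowN oppr_ge0.
Qed.

End Farkas.
Theorem proposition4 (R : realType) (m n : nat) (A : 'M[R]_(m, n))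
  (b : 'cV[R]_m) (c : 'cV[R]_n) (ps : 'cV[R]_m) (qs : 'cV[R]_n) (ts : R) :
  mlt 0 b -> mlt 0 c ->
  maximin (lp_game A b c) (col_mx (col_mx ps qs) (ts%:M : 'cV[R]_1)) ->
  (0 < ts -> optimal_pair A b c (ts^-1 *: qs) (ts^-1 *: ps)) /\
  (ts = 0 -> unbounded_cert A c qs).
Proof.
move=> hb hc hmax.
have hsk : (lp_game A b c)^T = - lp_game A b c.
  rewrite /lp_game !tr_block_mx !tr_col_mx !tr_row_mx !opp_block_mx.
  by rewrite !trmx0 !oppr0 !trmxK opp_col_mx opp_row_mx !opprK !linearN /= !trmxK.
have K0 : (0 < m + n + 1)%N by rewrite addn1.
have H := @maximin_skew _ _ _ _ hsk K0 hmax.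
have Ns : lp_game A b c *m col_mx (col_mx ps qs) ts%:M =
   col_mx (col_mx (A *m qs - ts *: b) (- (A^T *m ps) + ts *: c))
          (b^T *m ps - c^T *m qs).
  rewrite /lp_game !mul_block_col !mul_row_col !mul0mx !add0r !addr0 !mul_mx_scalar.
  by rewrite !scale_col_mx add_col_mx !mulNmx scalerN.
have H1 : forall i, (A *m qs) i 0 <= ts * b i 0.
  move=> i; have := H (lshift 1 (lshift n i)).
  by rewrite Ns !col_mxEu !mxE subr_le0.
have H2 : forall j, ts * c j 0 <= (A^T *m ps) j 0.
  move=> j; have := H (lshift 1 (rshift m j)).
  by rewrite Ns col_mxEu col_mxEd !mxE addrC subr_le0.
have H3 : (b^T *m ps) 0 0 <= (c^T *m qs) 0 0.
  have := H (rshift (m + n) 0).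
  by rewrite Ns col_mxEd !mxE subr_le0.
case: hmax => [[s0 s1] _].
have p0 : forall i, 0 <= ps i 0.
  by move=> i; have := s0 (lshift 1 (lshift n i)) 0; rewrite !col_mxEu mxE.
have q0 : forall j, 0 <= qs j 0.
  by move=> j; have := s0 (lshift 1 (rshift m j)) 0; rewrite col_mxEu col_mxEd mxE.
have t0 : 0 <= ts.
  by have := s0 (rshift (m + n) 0) 0; rewrite col_mxEd !mxE.
rewrite big_split_ord /= big_split_ord /= big_ord1 in s1.
have s2 : \sum_i ps i 0 + \sum_j qs j 0 + ts = 1.
  rewrite -s1; congr (_ + _ + _).
  - by apply: eq_bigr => i _; rewrite !col_mxEu.
  - by apply: eq_bigr => i _; rewrite col_mxEu col_mxEd.
  - by rewrite col_mxEd mxE.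
have bp : forall i, 0 < b i 0 by move=> i; have := hb i 0; rewrite mxE.
have cp : forall j, 0 < c j 0 by move=> j; have := hc j 0; rewrite mxE.
have cqE : (c^T *m qs) 0 0 = \sum_j c j 0 * qs j 0.
  by rewrite mxE; apply: eq_bigr => j _; rewrite mxE.
have bpE : (b^T *m ps) 0 0 = \sum_i b i 0 * ps i 0.
  by rewrite mxE; apply: eq_bigr => j _; rewrite mxE.
split.
  move=> tp; split.
  - split=> i j; rewrite (ord1 j).
      rewrite -scalemxAr [X in X <= _]mxE ler_pdivrMl //; exact: H1.
    by rewrite !mxE; apply: mulr_ge0; [rewrite invr_ge0 ltW | exact: q0].
  - split=> i j; rewrite (ord1 j).
      rewrite -scalemxAr [X in _ <= X]mxE ler_pdivlMl //; exact: H2.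
    by rewrite !mxE; apply: mulr_ge0; [rewrite invr_ge0 ltW | exact: p0].
  apply/matrixP => i0 j0; rewrite (ord1 i0) (ord1 j0) -!scalemxAr [LHS]mxE [RHS]mxE.
  congr (_ * _); apply: le_anti; rewrite H3 andbT.
  rewrite -(ler_pM2l tp).
  apply: (@le_trans _ _ (\sum_i ps i 0 * (A *m qs) i 0)).
    rewrite cqE mulr_sumr.
    apply: (@le_trans _ _ (\sum_j (A^T *m ps) j 0 * qs j 0)).
      apply: ler_sum => j _; rewrite mulrA; apply: ler_wpM2r => //; exact: H2.
    rewrite le_eqVlt; apply/orP; left; apply/eqP.
    under eq_bigr => j _ do rewrite mxE big_distrl /=.
    rewrite exchange_big /=; apply: eq_bigr => i _.
    rewrite mxE big_distrr /=; apply: eq_bigr => j _; rewrite !mxE; ring.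
  rewrite bpE mulr_sumr; apply: ler_sum => i _.
  rewrite mulrA [X in X <= _]mulrC; apply: ler_wpM2r => //; exact: H1.
move=> ts0; subst ts; split.
- by move=> i j; rewrite (ord1 j) [X in _ <= X]mxE; have := H1 i; rewrite mul0r.
- by move=> i j; rewrite (ord1 j) mxE.
rewrite ltNge; apply/negP => hle.
have hq : forall j, qs j 0 = 0.
  move=> j; have : c j 0 * qs j 0 = 0.
    apply: (psumr_eq0P (P := xpredT) (F := fun j => c j 0 * qs j 0)) => //.
      by move=> k _; apply: mulr_ge0; [exact: ltW | exact: q0].
    apply: le_anti; apply/andP; split; first by rewrite -cqE.
    by apply: sumr_ge0 => k _; apply: mulr_ge0; [exact: ltW | exact: q0].
  by move/eqP; rewrite mulf_eq0 gt_eqF //= => /eqP.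
have hp : forall i, ps i 0 = 0.
  move=> i; have : b i 0 * ps i 0 = 0.
    apply: (psumr_eq0P (P := xpredT) (F := fun i => b i 0 * ps i 0)) => //.
      by move=> k _; apply: mulr_ge0; [exact: ltW | exact: p0].
    apply: le_anti; apply/andP; split; last first.
      by apply: sumr_ge0 => k _; apply: mulr_ge0; [exact: ltW | exact: p0].
    by rewrite -bpE (le_trans H3).
  by move/eqP; rewrite mulf_eq0 gt_eqF //= => /eqP.
have e1 : \sum_i ps i 0 = 0 by apply: big1 => i _; exact: hp.
have e2 : \sum_j qs j 0 = 0 by apply: big1 => i _; exact: hq.
by move: s2; rewrite e1 e2 !add0r => /eqP; rewrite eq_sym oner_eq0.
Qed.
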